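(* Let $k\ge2$, let $\mathcal{F}$ be a saturated foliation of normal degree $d$ on $\mathbb{P}^2_k=\mathbb{P}(1,1,k)$, let $\pi:\mathbb{F}_k\to\mathbb{P}^2_k$ be the minimal resolution of $p_2=[0:0:1]$ with exceptional divisor $E$, let $r$ be the algebraic multiplicity of $\mathcal{F}$ at $p_2$ and $\mathcal{G}=\pi^*\mathcal{F}$. Then $\mathcal{G}$ is a Riccati foliation with respect to the natural rational fibration and $E$ is $\mathcal{G}$-invariant if and only if $r=d-k$. In particular, when these equivalent conditions hold, $\mathcal{F}$ has an invariant line.
   Context: $\mathbb{P}(1,1,k)$ is the quotient of $\mathbb{C}^3\setminus\{0\}$ by $t\cdot(x_0,x_1,x_2)=(tx_0,tx_1,t^kx_2)$. A foliation of normal degree $d$ is the class of a nonzero 1-form $\omega=\sum A_idx_i$ with $A_0,A_1$ quasi-homogeneous (weights $1,1,k$) of degree $d-1$, $A_2$ of degree $d-k$, $x_0A_0+x_1A_1+kx_2A_2=0$; saturated means finitely many zeros. Lines are curves $\{ax_0+bx_1=0\}$; a curve $\{P=0\}$ is invariant if $\omega\wedge dP=P\Theta$ for a polynomial 2-form $\Theta$. $E=\pi^{-1}(p_2)$, $E^2=-k$; the natural rational fibration of $\mathbb{F}_k$ has as fibres the strict transforms of lines through $p_2$. Algebraic multiplicity $r$: writing $\eta=\omega|_{x_2=1}=\sum_s\eta_s$ in coordinates $(x,y)=(x_0,x_1)$ with $\eta_s=a_sdx+b_sdy$, $a_s,b_s$ homogeneous of degree $s-1$, $r=\min\{s:\eta_s\ne0\}$.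 Riccati: transverse to the general fibre. *)

(* Defs.v *)
From HB Require Import structures.
From mathcomp Require Import all_boot all_order all_algebra.
From mathcomp Require Import mpoly.
Set Implicit Arguments. Unset Strict Implicit. Unset Printing Implicit Defensive.
Import Order.TTheory GRing.Theory Num.Theory.
Local Open Scope ring_scope.

(* Variables of C[x0,x1,x2] (homogeneous coordinates of P(1,1,k)). *)
Definition v0 : 'I_3 := @Ordinal 3 0 isT.
Definition v1 : 'I_3 := @Ordinal 3 1 isT.
Definition v2 : 'I_3 := @Ordinal 3 2 isT.
Definition u0 : 'I_2 := @Ordinal 2 0 isT.
Definition u1 : 'I_2 := @Ordinal 2 1 isT.

Definition pt3 {C : ringType} (a b c : C) : 'I_3 -> C :=
  fun i => nth 0 [:: a; b; c] i.
Definition pt2 {C : ringType} (a b : C) : 'I_2 -> C :=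
  fun i => nth 0 [:: a; b] i.

Definition wdeg (k : nat) (m : 'X_{1..3}) : nat := (m v0 + m v1 + k * m v2)%N.

(* p is quasi-homogeneous of weighted degree D (D may be negative: then p = 0) *)
Definition qhomog {C : ringType} (k : nat) (D : int) (p : {mpoly C[3]}) : Prop :=
  forall m, m \in msupp p -> (wdeg k m)%:Z = D.

(* omega = A0 dx0 + A1 dx1 + A2 dx2 defines a foliation of normal degree d
   on P(1,1,k) *)
Definition is_foliation {C : ringType} (k d : nat) (A0 A1 A2 : {mpoly C[3]}) : Prop :=
  [/\ qhomog k (d%:Z - 1) A0, qhomog k (d%:Z - 1) A1, qhomog k (d%:Z - k%:Z) A2,
      'X_v0 * A0 + 'X_v1 * A1 + k%:R *: ('X_v2 * A2) = 0
    & ~ (A0 = 0 /\ A1 = 0 /\ A2 = 0)].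

Definition wact {C : ringType} (k : nat) (t : C) (s : C * C * C) : 'I_3 -> C :=
  pt3 (t * s.1.1) (t * s.1.2) (t ^+ k * s.2).

(* saturated: omega has finitely many zeros on P(1,1,k), i.e. its zero set in
   C^3 \ {0} is a finite union of C^*-orbits *)
Definition saturated {C : ringType} (k : nat) (A0 A1 A2 : {mpoly C[3]}) : Prop :=
  exists S : seq (C * C * C), forall x : 'I_3 -> C,
    (exists i, x i != 0) ->
    A0.@[x] = 0 -> A1.@[x] = 0 -> A2.@[x] = 0 ->
    exists2 s, s \in S & exists2 t : C, t != 0 & x =1 wact k t s.

Definition dehom {C : comRingType} (p : {mpoly C[3]}) : {mpoly C[2]} :=
  p \mPo [tuple 'X_u0; 'X_u1; 1].

(* eta_s <> 0, where eta = omega|_{x2=1} = a dx + b dy and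
   eta_s = a_s dx + b_s dy with a_s, b_s homogeneous of degree s-1 *)
Definition eta_nz {C : comRingType} (A0 A1 : {mpoly C[3]}) (s : nat) : Prop :=
  exists m : 'X_{1..2}, mdeg m = s.-1 /\
    ((dehom A0)@_m != 0 \/ (dehom A1)@_m != 0).

(* r is the algebraic multiplicity at p2 = [0:0:1] : r = min {s : eta_s <> 0} *)
Definition alg_mult {C : comRingType} (A0 A1 : {mpoly C[3]}) (r : nat) : Prop :=
  [/\ (1 <= r)%N, eta_nz A0 A1 r
    & forall s, (1 <= s < r)%N -> ~ eta_nz A0 A1 s].

(* Over the fibres t = x1/x0 in C, F_k is covered by
     U1 : (t, v),  (t,v) |-> [1 : t : v]            (pi is an isomorphism there)
     U3 : (t, w),  (t,w) |-> [1 : t : 1/w] (w<>0),  (t,0) |-> p2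
   with w = 1/v = x0^k/x2, E = {w = 0}; the fibres of the natural rational
   fibration are {t = const}.
   On U1, G is given by  A1(1,t,v) dt + A2(1,t,v) dv.
   On U3, G is given by the saturated form P dt + Q dw, where
   P dt + Q dw = w^m (A1(1,t,1/w) dt - w^-2 A2(1,t,1/w) dw) for some m : int,
   with P, Q polynomials not both divisible by w. (variables: u0 = t, u1 = w)
   --------------------------------------------------------------------------- *)
Definition U3_form {C : fieldType} (A1 A2 : {mpoly C[3]}) (P Q : {mpoly C[2]}) : Prop :=
  (exists m : int, forall t w : C, w != 0 ->
      P.@[pt2 t w] = w ^ m * A1.@[pt3 1 t w^-1] /\
      Q.@[pt2 t w] = - (w ^ (m - 2) * A2.@[pt3 1 t w^-1]))
  /\ ~ (exists R S : {mpoly C[2]}, P = 'X_u1 * R /\ Q = 'X_u1 * S).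

(* G is transverse to the fibre {t = c} at every point of it:
   at (c,v) in U1 (fibre direction d/dv) and at the point (c,0) of E in U3
   (fibre direction d/dw). *)
Definition fibre_transverse {C : fieldType} (A2 : {mpoly C[3]}) (Q : {mpoly C[2]})
  (c : C) : Prop :=
  (forall v : C, A2.@[pt3 1 c v] != 0) /\ Q.@[pt2 c 0] != 0.

(* Riccati: transverse to the general fibre *)
Definition riccati {C : fieldType} (A2 : {mpoly C[3]}) (Q : {mpoly C[2]}) : Prop :=
  exists S : seq C, forall c, c \notin S -> fibre_transverse A2 Q c.

(* E = {w = 0} is G-invariant:  (P dt + Q dw) /\ dw = w Theta *)
Definition E_invariant {C : fieldType} (P : {mpoly C[2]}) : Prop :=
  exists Theta : {mpoly C[2]}, P = 'X_u1 * Theta.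

Definition G_riccati_and_E_invariant {C : fieldType} (A1 A2 : {mpoly C[3]}) : Prop :=
  exists P Q : {mpoly C[2]}, [/\ U3_form A1 A2 P Q, riccati A2 Q & E_invariant P].

(* invariant curve {F = 0}: omega /\ dF = F Theta, Theta a polynomial 2-form;
   the dx_i/\dx_j coefficient of omega /\ dF is A_i dF/dx_j - A_j dF/dx_i *)
Definition invariant_curve {C : ringType} (A0 A1 A2 F : {mpoly C[3]}) : Prop :=
  let A := fun i : 'I_3 => nth 0 [:: A0; A1; A2] i in
  forall i j : 'I_3, exists Theta : {mpoly C[3]},
    A i * F^`M(j) - A j * F^`M(i) = F * Theta.

Definition has_invariant_line {C : ringType} (A0 A1 A2 : {mpoly C[3]}) : Prop :=
  exists a b : C, (a != 0 \/ b != 0) /\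
    invariant_curve A0 A1 A2 (a *: 'X_v0 + b *: 'X_v1).

(* Main.v *)
Require Import Defs.
From HB Require Import structures.
From mathcomp Require Import all_boot all_order all_algebra.
From mathcomp Require Import mpoly.
From mathcomp Require Import zify ring.
Import Order.TTheory GRing.Theory Num.Theory.
Local Open Scope ring_scope.
Set Implicit Arguments. Unset Strict Implicit.

Section Aux.
Variable C : numClosedFieldType.

Lemma I3P (i : 'I_3) : [\/ i = v0, i = v1 | i = v2].
Proof.
case: i => [[|[|[|n]]] Hi]; [constructor 1|constructor 2|constructor 3|by []];
  exact: val_inj.
Qed.

Lemma I2P (i : 'I_2) : i = u0 \/ i = u1.
Proof.
case: i => [[|[|n]] Hi]; [left|right|by []]; exact: val_inj.
Qed.

Lemma prod3 (R : comNzRingType) (F : 'I_3 -> R) :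
  \prod_(i < 3) F i = F v0 * F v1 * F v2.
Proof.
rewrite !big_ord_recl big_ord0 mulr1 mulrA.
by congr (F _ * F _ * F _); apply: val_inj.
Qed.

Lemma prod2 (R : comNzRingType) (F : 'I_2 -> R) :
  \prod_(i < 2) F i = F u0 * F u1.
Proof.
rewrite !big_ord_recl big_ord0 mulr1.
by congr (F _ * F _); apply: val_inj.
Qed.

Lemma meval3 (A : {mpoly C[3]}) a b c :
  A.@[pt3 a b c] = \sum_(m <- msupp A) A@_m * (a ^+ m v0 * b ^+ m v1 * c ^+ m v2).
Proof. by rewrite mevalE; apply: eq_bigr => m _; rewrite prod3. Qed.

Lemma meval2 (A : {mpoly C[2]}) a b :
  A.@[pt2 a b] = \sum_(m <- msupp A) A@_m * (a ^+ m u0 * b ^+ m u1).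
Proof. by rewrite mevalE; apply: eq_bigr => m _; rewrite prod2. Qed.



Lemma NR0 {p : {poly C}} : p != 0 -> exists t, p.[t] != 0.
Proof.
move=> p0; set rs := [seq i%:R | i <- iota 0 (size p)] : seq C.
have: ~~ all (root p) rs.
  apply/negP => hall.
  have U : uniq rs.
    by rewrite map_inj_uniq ?iota_uniq // => i j /eqP; rewrite eqr_nat => /eqP.
  by have := max_poly_roots p0 hall U; rewrite size_map size_iota ltnn.
by rewrite -has_predC => /hasP [t _ /= Ht]; exists t.
Qed.

Lemma NR {p : {poly C}} (T : seq C) : p != 0 -> exists t, t \notin T /\ p.[t] != 0.
Proof.
move=> p0.
have q0 : p * \prod_(z <- T) ('X - z%:P) != 0.
  by rewrite mulf_neq0 // monic_neq0 // monic_prod_XsubC.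
have [t Ht] := NR0 q0; exists t; rewrite hornerM horner_prod in Ht; split.
  apply/negP => tT; move: Ht; rewrite (big_rem t tT) /= hornerXsubC subrr.
  by rewrite mul0r mulr0 eqxx.
by move: Ht; apply: contra => /eqP->; rewrite mul0r.
Qed.

Lemma ZP (p : {poly C}) (T : seq C) : (forall x, x \notin T -> p.[x] = 0) -> p = 0.
Proof.
move=> H; apply/eqP/negPn/negP => p0.
by have [t [tT]] := NR T p0; rewrite H // eqxx.
Qed.

Lemma RS {p : {poly C}} : p != 0 -> exists S : seq C, forall c, c \notin S -> p.[c] != 0.
Proof.
move=> p0; have [rs Hrs] := closed_field_poly_normal p.
exists rs => c cn; rewrite Hrs hornerZ horner_prod mulf_neq0 ?lead_coef_eq0 //.
rewrite prodf_seq_neq0; apply/allP => z zr /=; rewrite hornerXsubC subr_eq0.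
by apply: contraNneq cn => ->.
Qed.


Lemma posz_inj (a b : nat) : a%:Z = b%:Z -> a = b.
Proof. by case. Qed.

Lemma qh_uniq01 k D (A : {mpoly C[3]}) m m' : qhomog k D A -> (0 < k)%N ->
  m \in msupp A -> m' \in msupp A -> m v0 = m' v0 -> m v1 = m' v1 -> m = m'.
Proof.
move=> qh k0 hm hm' e0 e1; have h := qh _ hm; have h' := qh _ hm'.
rewrite /wdeg -h' in h; move/posz_inj: h; rewrite e0 e1 => /eqP.
rewrite -addnA -[X in _ == X]addnA !eqn_add2l eqn_pmul2l // => /eqP e2.
by apply/mnmP => i; case: (I3P i) => ->.
Qed.

Lemma qh_uniq12 k D (A : {mpoly C[3]}) m m' : qhomog k D A ->
  m \in msupp A -> m' \in msupp A -> m v1 = m' v1 -> m v2 = m' v2 -> m = m'.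
Proof.
move=> qh hm hm' e1 e2; have h := qh _ hm; have h' := qh _ hm'.
rewrite /wdeg -h' in h; move/posz_inj: h; rewrite e1 e2 => /eqP.
rewrite !eqn_add2r => /eqP e0.
by apply/mnmP => i; case: (I3P i) => ->.
Qed.

Lemma mcoeffXiM n (p : {mpoly C[n]}) (i : 'I_n) m :
  ('X_i * p)@_m = if (0 < m i)%N then p@_(m - U_(i))%MM else 0.
Proof.
rewrite mulrC; case: ifP => h.
  by rewrite -{1}(@submK _ U_(i) m) ?lep1mP -?lt0n // addmC mcoeffMX.
apply: memN_msupp_eq0; rewrite (perm_mem (msuppMX _ _)).
apply/mapP => -[m' _ em]; move: h; rewrite em mnmDE mnm1E eqxx.
by rewrite add1n.
Qed.

Definition low (A : {mpoly C[3]}) j := forall m, m \in msupp A -> (m v2 <= j)%N.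

Lemma lowN A j (m : 'X_{1..3}) : low A j -> (j < m v2)%N -> A@_m = 0.
Proof.
move=> hl hj; apply: memN_msupp_eq0; apply/negP => /hl; rewrite leqNgt hj.
by [].
Qed.

Definition pa (A : {mpoly C[3]}) j : {poly C} :=
  \sum_(m <- msupp A | m v2 == j) A@_m *: 'X^(m v1).

Lemma hornerpa A j t :
  (pa A j).[t] = \sum_(m <- msupp A | m v2 == j) A@_m * t ^+ m v1.
Proof. by rewrite horner_sum; apply: eq_bigr => m _; rewrite hornerZ hornerXn. Qed.

Lemma coefpa k D A (m : 'X_{1..3}) : qhomog k D A -> m \in msupp A ->
  (pa A (m v2))`_(m v1) = A@_m.
Proof.
move=> qh hm; rewrite /pa coef_sum big_mkcond (bigD1_seq m) ?msupp_uniq //=.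
rewrite eqxx coefZ coefXn eqxx mulr1 big1_seq ?addr0 // => m' /andP[hm'm hm'].
case: eqP => // e2; rewrite coefZ coefXn; case: eqP; last by rewrite mulr0.
move=> e1; case/negP: hm'm; apply/eqP.
exact: (qh_uniq12 qh hm' hm (esym e1) e2).
Qed.

Lemma pa_neq0 k D A (m : 'X_{1..3}) : qhomog k D A -> m \in msupp A -> pa A (m v2) != 0.
Proof.
move=> qh hm; apply/eqP => h.
have := coefpa qh hm; rewrite h coef0 => /esym/eqP.
by rewrite mcoeff_eq0 hm.
Qed.

Definition pv (A : {mpoly C[3]}) c : {poly C} :=
  \sum_(m <- msupp A) (A@_m * c ^+ m v1) *: 'X^(m v2).

Lemma hornerpv A c v : (pv A c).[v] = A.@[pt3 1 c v].
Proof.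
rewrite meval3 horner_sum; apply: eq_bigr => m _.
by rewrite hornerZ hornerXn expr1n mul1r mulrA.
Qed.

Lemma coefpv A c j : (pv A c)`_j = (pa A j).[c].
Proof.
rewrite coef_sum hornerpa [RHS]big_mkcond; apply: eq_bigr => m _.
rewrite coefZ coefXn eq_sym; case: eqP => _; by rewrite ?mulr1 ?mulr0.
Qed.

Definition qw (Q : {mpoly C[2]}) c : {poly C} :=
  \sum_(m <- msupp Q) (Q@_m * c ^+ m u0) *: 'X^(m u1).

Lemma hornerqw Q c w : (qw Q c).[w] = Q.@[pt2 c w].
Proof.
rewrite meval2 horner_sum; apply: eq_bigr => m _.
by rewrite hornerZ hornerXn mulrA.
Qed.

End Aux.

Lemma v01 : (v0 == v1) = false. Proof. by []. Qed.
Lemma v02 : (v0 == v2) = false. Proof. by []. Qed.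
Lemma v10 : (v1 == v0) = false. Proof. by []. Qed.
Lemma v12 : (v1 == v2) = false. Proof. by []. Qed.
Lemma v20 : (v2 == v0) = false. Proof. by []. Qed.
Lemma v21 : (v2 == v1) = false. Proof. by []. Qed.

Ltac mnm_simpl := rewrite ?mnmBE ?mnmDE ?mnm1E ?eqxx ?v01 ?v02 ?v10 ?v12 ?v20 ?v21 /= ?add0n ?addn0.


Lemma pa_low (C : numClosedFieldType) (A : {mpoly C[3]}) j j' :
  low A j -> (j < j')%N -> pa A j' = 0.
Proof.
move=> l jj; rewrite /pa big1_seq // => m /andP[/eqP e hm].
by move: (l m hm); rewrite e leqNgt jj.
Qed.

Lemma eval_low1 (C : numClosedFieldType) (A : {mpoly C[3]}) t v : low A 1 ->
  A.@[pt3 1 t v] = (pa A 0).[t] + v * (pa A 1).[t].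
Proof.
move=> l; rewrite meval3 !hornerpa mulr_sumr.
rewrite [X in _ = X + _]big_mkcond [X in _ = _ + X]big_mkcond.
rewrite -big_split /=; apply: eq_big_seq => m hm.
have := l m hm; case: (m v2) => [|[|//]] _ /=; rewrite expr1n mul1r.
  by ring.
by ring.
Qed.

Lemma eval_low0 (C : numClosedFieldType) (A : {mpoly C[3]}) t v : low A 0 ->
  A.@[pt3 1 t v] = (pa A 0).[t].
Proof.
move=> l; rewrite eval_low1 ?(pa_low (j':=1) l) ?horner0 ?mulr0 ?addr0 //.
by move=> m hm; apply: leq_trans (l m hm) _.
Qed.

Lemma pa0_low (C : numClosedFieldType) (A : {mpoly C[3]}) t : low A 0 ->
  (pa A 0).[t] = \sum_(m <- msupp A) A@_m * t ^+ m v1.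
Proof.
move=> l; rewrite hornerpa big_seq_cond [RHS]big_seq_cond; apply: eq_bigl => m.
by case hm: (m \in msupp A) => //=; rewrite -leqn0 (l m hm).
Qed.

Lemma mevalXn (R : comNzRingType) n (v : 'I_n -> R) (i : 'I_n) e :
  ('X_i ^+ e : {mpoly R[n]}).@[v] = v i ^+ e.
Proof.
elim: e => [|e IH]; first by rewrite !expr0 meval1.
by rewrite !exprS mevalM IH mevalXU.
Qed.


Lemma dX (C : numClosedFieldType) (i l : 'I_3) :
  ('X_i : {mpoly C[3]})^`M(l) = ((i == l)%:R : C)%:MP.
Proof.
rewrite mderivX mnm1E; case: eqP => [->|_]; last by rewrite scale0r mpolyC0.
rewrite (_ : (U_(l) - U_(l))%MM = 0%MM) ?mpolyX0 ?scale1r ?mpolyC1 //.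
by apply/mnmP => l'; rewrite mnmBE subnn mnm0E.
Qed.

Lemma INV (C : numClosedFieldType) (A0 A1 A2 : {mpoly C[3]}) (a b : C) (T2 TH : {mpoly C[3]}) :
  A2 = (a *: 'X_v0 + b *: 'X_v1) * T2 ->
  b *: A0 - a *: A1 = (a *: 'X_v0 + b *: 'X_v1) * TH ->
  invariant_curve A0 A1 A2 (a *: 'X_v0 + b *: 'X_v1).
Proof.
move=> h2 hH.
have dF : forall l, (a *: 'X_v0 + b *: 'X_v1 : {mpoly C[3]})^`M(l) =
    (a * (v0 == l)%:R + b * (v1 == l)%:R)%:MP.
  by move=> l; rewrite mderivD !mderivZ !dX -!mul_mpolyC -!mpolyCM mpolyCD.
rewrite /invariant_curve => p q; rewrite !dF.
set F := (a *: 'X_v0 + b *: 'X_v1 : {mpoly C[3]}) in h2 hH *.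
rewrite -!mul_mpolyC in hH.
case: (I3P p) => ->; case: (I3P q) => -> /=; rewrite ?eqxx ?v01 ?v02 ?v10 ?v12 ?v20 ?v21 /=;
  rewrite ?mulr1 ?mulr0 ?addr0 ?add0r ?mpolyC0.
- by exists 0; rewrite subrr mulr0.
- by exists TH; rewrite -hH; ring.
- by exists (- (a%:MP * T2)); rewrite h2; ring.
- by exists (- TH); rewrite mulrN -hH; ring.
- by exists 0; rewrite subrr mulr0.
- by exists (- (b%:MP * T2)); rewrite h2; ring.
- by exists (a%:MP * T2); rewrite h2; ring.
- by exists (b%:MP * T2); rewrite h2; ring.
- by exists 0; rewrite subrr mulr0.
Qed.

Definition sig (C : numClosedFieldType) (i j : 'I_3) (tau : C) : 3.-tuple {mpoly C[3]} :=
  [tuple (if l == i then tau *: 'X_j else 'X_l) | l < 3].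

Lemma DL (C : numClosedFieldType) (i j : 'I_3) (tau : C) (H : {mpoly C[3]}) :
  exists Th, H = H \mPo sig i j tau + ('X_i - tau *: 'X_j) * Th.
Proof.
elim/mpolyind: H => [|c m p _ _ [Tp IH]].
  by exists 0; rewrite comp_mpoly0 mulr0 addr0.
set R := \prod_(l < 3 | l != i) ('X_l : {mpoly C[3]}) ^+ m l.
set e := m i.
have hm : 'X_[m] = 'X_i ^+ e * R :> {mpoly C[3]} by rewrite mpolyXE_id (bigD1 i).
have hs : 'X_[m] \mPo sig i j tau = (tau *: 'X_j) ^+ e * R.
  rewrite comp_mpolyX (bigD1 i) //= tnth_mktuple eqxx; congr (_ * _).
  by apply: eq_bigr => l /negbTE hl; rewrite tnth_mktuple hl.
exists (c *: ((\sum_(k < e) 'X_i ^+ (e.-1 - k) * (tau *: 'X_j) ^+ k) * R) + Tp).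
set S := \sum_(k < e) 'X_i ^+ (e.-1 - k) * (tau *: 'X_j) ^+ k.
have key : 'X_i ^+ e = (tau *: 'X_j) ^+ e + ('X_i - tau *: 'X_j) * S.
  by rewrite /S -subrXX addrC subrK.
rewrite comp_mpolyD comp_mpolyZ hs {1}IH hm key.
rewrite -!mul_mpolyC; ring.
Qed.

Lemma compX (C : numClosedFieldType) (l : 'I_3) (lq : 3.-tuple {mpoly C[3]}) :
  ('X_l : {mpoly C[3]}) \mPo lq = tnth lq l.
Proof. by rewrite comp_mpolyXU (tnth_nth 0). Qed.

Lemma compM (C : numClosedFieldType) (lq : 3.-tuple {mpoly C[3]}) (p q : {mpoly C[3]}) :
  (p * q) \mPo lq = (p \mPo lq) * (q \mPo lq).
Proof. exact: (rmorphM (comp_mpoly lq)). Qed.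

Lemma Xnz (C : numClosedFieldType) (l : 'I_3) : ('X_l : {mpoly C[3]}) != 0.
Proof.
apply/eqP => e; have := congr1 (fun p : {mpoly C[3]} => p@_(U_(l))%MM) e.
by rewrite /= mcoeffX eqxx mcoeff0 => /eqP; rewrite oner_eq0.
Qed.

Section Fol.
Variable C : numClosedFieldType.
Variables (k d : nat) (A0 A1 A2 : {mpoly C[3]}).
Hypothesis hk : (2 <= k)%N.
Hypothesis q0 : qhomog k (d%:Z - 1) A0.
Hypothesis q1 : qhomog k (d%:Z - 1) A1.
Hypothesis q2 : qhomog k (d%:Z - k%:Z) A2.
Hypothesis Eul : 'X_v0 * A0 + 'X_v1 * A1 + k%:R *: ('X_v2 * A2) = 0.

Lemma kn0 : (k%:R : C) != 0.
Proof. by rewrite pnatr_eq0; apply/eqP => e; move: hk; rewrite e. Qed.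

Lemma EC (n : 'X_{1..3}) :
  (if (0 < n v0)%N then A0@_(n - U_(v0))%MM else 0) +
  (if (0 < n v1)%N then A1@_(n - U_(v1))%MM else 0) +
  k%:R * (if (0 < n v2)%N then A2@_(n - U_(v2))%MM else 0) = 0.
Proof.
have := congr1 (fun p : {mpoly C[3]} => p@_n) Eul.
by rewrite /= !mcoeffD mcoeffZ !mcoeffXiM mcoeff0.
Qed.

Lemma low_A2 : low A0 1 -> low A1 1 -> low A2 0.
Proof.
move=> l0 l1 m hm; rewrite leqn0; apply/negPn/negP => hm2.
have := EC (U_(v2) + m)%MM.
have -> : (if (0 < (U_(v2) + m)%MM v0)%N then A0@_((U_(v2) + m) - U_(v0))%MM else 0) = 0.
  case: ifP => // _; apply: (lowN l0); mnm_simpl; lia.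
have -> : (if (0 < (U_(v2) + m)%MM v1)%N then A1@_((U_(v2) + m) - U_(v1))%MM else 0) = 0.
  case: ifP => // _; apply: (lowN l1); mnm_simpl; lia.
mnm_simpl; rewrite addmC addmK !add0r => /eqP; rewrite mulf_eq0 (negbTE kn0) /=.
by rewrite mcoeff_eq0 hm.
Qed.

Lemma low_A0 : low A1 1 -> low A2 0 -> low A0 1.
Proof.
move=> l1 l2 m hm; rewrite leqNgt; apply/negP => hm2.
have := EC (U_(v0) + m)%MM.
have -> : (if (0 < (U_(v0) + m)%MM v1)%N then A1@_((U_(v0) + m) - U_(v1))%MM else 0) = 0.
  case: ifP => // _; apply: (lowN l1); mnm_simpl; lia.
have -> : (if (0 < (U_(v0) + m)%MM v2)%N then A2@_((U_(v0) + m) - U_(v2))%MM else 0) = 0.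
  case: ifP => // _; apply: (lowN l2); mnm_simpl; lia.
mnm_simpl; rewrite addmC addmK mulr0 !addr0 => /eqP.
by rewrite mcoeff_eq0 hm.
Qed.

Lemma ex1 : low A2 0 -> A2 != 0 ->
  exists m, (m \in msupp A0 \/ m \in msupp A1) /\ m v2 = 1%N.
Proof.
move=> l2 nz2.
have [m hm] : exists m, m \in msupp A2.
  case E: (msupp A2) => [|m s]; last by exists m; rewrite mem_head.
  by move/eqP: E; rewrite msupp_eq0 (negbTE nz2).
have m2 : m v2 = 0%N by apply/eqP; rewrite -leqn0; apply: l2.
have := EC (U_(v2) + m)%MM; mnm_simpl; rewrite addmC addmK.
case: ifP => h0; case: ifP => h1.
- case: (eqVneq (A0@_((m + U_(v2)) - U_(v0))%MM) 0) => [e0|ne0].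
    case: (eqVneq (A1@_((m + U_(v2)) - U_(v1))%MM) 0) => [e1|ne1].
      rewrite e0 e1 !add0r => /eqP; rewrite mulf_eq0 (negbTE kn0) /=.
      by rewrite mcoeff_eq0 hm.
    move=> _; exists ((m + U_(v2)) - U_(v1))%MM; split; first by right; rewrite mcoeff_msupp.
    by mnm_simpl; lia.
  move=> _; exists ((m + U_(v2)) - U_(v0))%MM; split; first by left; rewrite mcoeff_msupp.
  by mnm_simpl; lia.
- case: (eqVneq (A0@_((m + U_(v2)) - U_(v0))%MM) 0) => [e0|ne0].
    rewrite e0 !add0r => /eqP; rewrite mulf_eq0 (negbTE kn0) /=.
    by rewrite mcoeff_eq0 hm.
  move=> _; exists ((m + U_(v2)) - U_(v0))%MM; split; first by left; rewrite mcoeff_msupp.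
  by mnm_simpl; lia.
- case: (eqVneq (A1@_((m + U_(v2)) - U_(v1))%MM) 0) => [e1|ne1].
    rewrite e1 !add0r => /eqP; rewrite mulf_eq0 (negbTE kn0) /=.
    by rewrite mcoeff_eq0 hm.
  move=> _; exists ((m + U_(v2)) - U_(v1))%MM; split; first by right; rewrite mcoeff_msupp.
  by mnm_simpl; lia.
- rewrite !add0r => /eqP; rewrite mulf_eq0 (negbTE kn0) /=.
  by rewrite mcoeff_eq0 hm.
Qed.


Definition mono2 a b : 'X_{1..2} := (U_(u0) *+ a + U_(u1) *+ b)%MM.

Lemma mono2E0 a b : mono2 a b u0 = a.
Proof. by rewrite /mono2 mnmDE !mulmnE !mnm1E /=; lia. Qed.
Lemma mono2E1 a b : mono2 a b u1 = b.
Proof. by rewrite /mono2 mnmDE !mulmnE !mnm1E /=; lia. Qed.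
Lemma mdeg_mono2 a b : mdeg (mono2 a b) = (a + b)%N.
Proof. by rewrite /mono2 mdegD !mdegMn !mdeg1 !mul1n. Qed.

Lemma dehom_coef (p : {mpoly C[3]}) mu :
  (dehom p)@_mu = \sum_(m <- msupp p) p@_m * (mono2 (m v0) (m v1) == mu)%:R.
Proof.
rewrite /dehom comp_mpolyE raddf_sum; apply: eq_bigr => m _.
rewrite prod3 /= mcoeffZ; congr (_ * _).
rewrite (_ : tnth _ v0 = 'X_u0) // (_ : tnth _ v1 = 'X_u1) //.
rewrite (_ : tnth _ v2 = 1) // expr1n mulr1 !mpolyXn -mpolyXD mcoeffX.
by [].
Qed.

Lemma dehom_nz (p : {mpoly C[3]}) mu : (dehom p)@_mu != 0 ->
  exists2 m, m \in msupp p & mono2 (m v0) (m v1) = mu.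
Proof.
move=> h.
have /hasP [m hm /eqP e] : has (fun m : 'X_{1..3} => mono2 (m v0) (m v1) == mu) (msupp p).
  apply/negPn/negP => /hasPn H; move: h; rewrite dehom_coef big1_seq ?eqxx //.
  by move=> m /andP[_ hm]; rewrite (negbTE (H m hm)) mulr0.
by exists m.
Qed.

Lemma dehom_coef_m D (p : {mpoly C[3]}) m : qhomog k D p -> m \in msupp p ->
  (dehom p)@_(mono2 (m v0) (m v1)) = p@_m.
Proof.
move=> qh hm; rewrite dehom_coef (bigD1_seq m) ?msupp_uniq //= eqxx mulr1.
rewrite big1_seq ?addr0 // => m' /andP[ne hm']; case: eqP; last by rewrite mulr0.
move=> e; case/negP: ne; apply/eqP; apply: (qh_uniq01 qh) => //.
- by lia.
- by rewrite -(mono2E0 (m' v0) (m' v1)) e mono2E0.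
- by rewrite -(mono2E1 (m' v0) (m' v1)) e mono2E1.
Qed.

Definition inA (m : 'X_{1..3}) := m \in msupp A0 \/ m \in msupp A1.

Lemma qhnat m : inA m -> (m v0 + m v1 + k * m v2).+1 = d.
Proof.
case=> hm; [have := q0 hm | have := q1 hm]; rewrite /wdeg; lia.
Qed.

Lemma eta_iff s : (1 <= s)%N ->
  eta_nz A0 A1 s <-> exists m, inA m /\ (m v0 + m v1)%N = s.-1.
Proof.
move=> s1; split.
  case=> mu [dmu [h|h]]; have [m hm e] := dehom_nz h; exists m.
    by split; [left | rewrite -dmu -e mdeg_mono2].
  by split; [right | rewrite -dmu -e mdeg_mono2].
case=> m [[hm|hm] e]; exists (mono2 (m v0) (m v1)); rewrite mdeg_mono2 e; split => //.
  by left; rewrite (dehom_coef_m q0 hm) -mcoeff_msupp.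
by right; rewrite (dehom_coef_m q1 hm) -mcoeff_msupp.
Qed.

Definition good := [/\ low A0 1, low A1 1 & exists m, inA m /\ m v2 = 1%N].

Lemma good_iff r : alg_mult A0 A1 r -> ((r + k)%N = d <-> good).
Proof.
case=> r1 etar minr.
have [m0 [hm0 e0]] := (eta_iff r1).1 etar.
have W0 := qhnat hm0.
split=> [erd|].
  have lowA : forall m, inA m -> (m v2 <= 1)%N.
    move=> m hm; rewrite leqNgt; apply/negP => h2.
    have W := qhnat hm.
    apply: (minr (m v0 + m v1).+1); first by apply/andP; split => //; nia.
    by apply/(eta_iff (ltn0Sn _)); exists m.
  split.
  - by move=> m hm; apply: lowA; left.
  - by move=> m hm; apply: lowA; right.
  - exists m0; split => //; nia.
case=> l0 l1 [m [hm e2]]; have W := qhnat hm.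
have l: (m0 v2 <= 1)%N by case: hm0 => h; [apply: l0 | apply: l1].
have : ~ (1 <= (m v0 + m v1).+1 < r)%N.
  by move=> h; apply: (minr _ h); apply/(eta_iff (ltn0Sn _)); exists m.
move/negP; rewrite negb_and ltn0Sn /= -leqNgt => h.
nia.
Qed.


Lemma EulE t v : A0.@[pt3 1 t v] + t * A1.@[pt3 1 t v] + k%:R * (v * A2.@[pt3 1 t v]) = 0.
Proof.
have := congr1 (meval (pt3 1 t v)) Eul.
by rewrite !mevalD mevalZ !mevalM !mevalXU meval0 /= mul1r.
Qed.

Lemma A2_nz : saturated k A0 A1 A2 -> good -> A2 != 0.
Proof.
move=> [S HS] [l0 l1 [m [hm e2]]]; apply/eqP => A20.
have [m1 [hm1 e21]] : exists m1, m1 \in msupp A1 /\ m1 v2 = 1%N.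
  case: hm => hm; last by exists m.
  have := EC (U_(v0) + m)%MM; mnm_simpl; rewrite addmC addmK A20 mcoeff0 if_same mulr0 addr0.
  case: ifP => h1; last by rewrite addr0 => /eqP; rewrite mcoeff_eq0 hm.
  case: (eqVneq (A1@_((m + U_(v0)) - U_(v1))%MM) 0) => [e|ne].
    by rewrite e addr0 => /eqP; rewrite mcoeff_eq0 hm.
  move=> _; exists ((m + U_(v0)) - U_(v1))%MM; rewrite mcoeff_msupp; split => //.
  by mnm_simpl; lia.
have bn0 : pa A1 1%N != 0 by rewrite -e21; apply: (pa_neq0 q1).
have [t [tT bt]] := NR [seq s.1.2 / s.1.1 | s <- S] bn0.
set v := - (pa A1 0).[t] / (pa A1 1).[t].
have E1 : A1.@[pt3 1 t v] = 0.
  by rewrite eval_low1 // /v divfK // subrr.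
have E0 : A0.@[pt3 1 t v] = 0.
  by have := EulE t v; rewrite E1 A20 meval0 !mulr0 !addr0.
have E2 : A2.@[pt3 1 t v] = 0 by rewrite A20 meval0.
have Ex : exists i, pt3 1 t v i != 0 by exists v0; exact: oner_neq0.
have [s sS [t' t'n hx]] := HS (pt3 1 t v) Ex E0 E1 E2.
move: tT; rewrite /= => /negP; apply; apply/mapP; exists s => //.
have ex0 := hx v0; have ex1 := hx v1; rewrite /wact /pt3 /= in ex0 ex1.
have s11n : s.1.1 != 0 by apply/eqP => e; move: ex0; rewrite e mulr0; apply/eqP/oner_neq0.
apply: (mulIf s11n); rewrite divfK // ex1 mulrAC -ex0 mul1r.
by [].
Qed.

Lemma alpha_nz : low A2 0 -> A2 != 0 -> pa A2 0 != 0.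
Proof.
move=> l2 nz2.
have [m hm] : exists m, m \in msupp A2.
  case E: (msupp A2) => [|m s]; last by exists m; rewrite mem_head.
  by move/eqP: E; rewrite msupp_eq0 (negbTE nz2).
have m2 : m v2 = 0%N by apply/eqP; rewrite -leqn0; apply: l2.
by have := pa_neq0 q2 hm; rewrite m2.
Qed.

Lemma riccati_of_good : saturated k A0 A1 A2 -> good -> G_riccati_and_E_invariant A1 A2.
Proof.
move=> sat gd; have nz2 := A2_nz sat gd; case: gd => l0 l1 _.
have l2 := low_A2 l0 l1; have an0 := alpha_nz l2 nz2.
set Th : {mpoly C[2]} := \sum_(m <- msupp A1) A1@_m *: ('X_u0 ^+ m v1 * 'X_u1 ^+ (1 - m v2)).
set Q : {mpoly C[2]} := - \sum_(m <- msupp A2) A2@_m *: ('X_u0 ^+ m v1).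
have QE : forall t w, Q.@[pt2 t w] = - (pa A2 0).[t].
  move=> t w; rewrite /Q mevalN pa0_low //; congr (- _); rewrite (big_morph (meval (pt2 t w)) (mevalD _) (meval0 _)); apply: eq_bigr => m _.
  by rewrite mevalZ mevalXn.
have ThE : forall t w, Th.@[pt2 t w] = \sum_(m <- msupp A1) A1@_m * (t ^+ m v1 * w ^+ (1 - m v2)).
  move=> t w; rewrite /Th (big_morph (meval (pt2 t w)) (mevalD _) (meval0 _)); apply: eq_bigr => m _.
  by rewrite mevalZ mevalM !mevalXn.
exists ('X_u1 * Th), Q; split.
- split.
    exists 2%:Z => t w wn; split; last first.
      by rewrite QE subrr expr0z mul1r eval_low0.
    rewrite mevalM mevalXU ThE meval3 /= mulr_sumr [RHS]mulr_sumr.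
    apply: eq_big_seq => m hm; have := l1 m hm.
    case: (m v2) => [|[|//]] _ /=; rewrite expr1n ?expr0 ?expr1 ?subn0 ?subnn.
      by rewrite /pt2 /= -[w ^ 2%Z]/(w ^+ 2); ring.
    by rewrite /pt2 /= -[w ^ 2%Z]/(w ^+ 2); field.
  case=> R [S' [_ eQ]]; have [t tn] := NR0 an0.
  by move: (QE t 0); rewrite eQ mevalM mevalXU /= mul0r => /esym/eqP; rewrite oppr_eq0 (negbTE tn).
- have [S HS] := RS an0; exists S => c cS; split.
    by move=> v; rewrite eval_low0 // HS.
  by rewrite QE oppr_eq0 HS.
- by exists Th.
Qed.


Lemma stepA : (exists S : seq C, forall c, c \notin S -> forall v, A2.@[pt3 1 c v] != 0) ->
  low A2 0 /\ A2 != 0.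
Proof.
case=> S HS; split; last first.
  apply/eqP => A20; have [c [cS _]] := NR S (oner_neq0 {poly C}).
  by have := HS c cS 0; rewrite A20 meval0 eqxx.
move=> m hm; rewrite leqNgt; apply/negP => hj.
have := pa_neq0 q2 hm; apply/negP/negPn/eqP.
apply: (ZP (T := S)) => c cS.
have sz : size (pv A2 c) = 1%N.
  apply/eqP; apply/negPn/negP => /closed_rootP [x].
  by rewrite /root hornerpv (negbTE (HS c cS x)).
by rewrite -coefpv nth_default // sz.
Qed.

Lemma stepB (Q : {mpoly C[2]}) (mm : int) (S : seq C) : low A2 0 -> A2 != 0 ->
  (forall t w, w != 0 -> Q.@[pt2 t w] = - (w ^ (mm - 2) * A2.@[pt3 1 t w^-1])) ->
  (forall c, c \notin S -> Q.@[pt2 c 0] != 0) -> mm = 2.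
Proof.
move=> l2 nz2 HQ HS; have an0 := alpha_nz l2 nz2.
have [c [cS ac]] := NR S an0.
have Qc := HS c cS; rewrite -hornerqw in Qc.
have Hq : forall w, w != 0 -> (qw Q c).[w] = - (w ^ (mm - 2) * (pa A2 0).[c]).
  by move=> w wn; rewrite hornerqw HQ // eval_low0.
case E: (mm - 2) => [[|n]|n] in Hq.
- by apply/eqP; rewrite -subr_eq0 E.
- have r0 : qw Q c + (pa A2 0).[c] *: 'X^(n.+1) = 0.
    apply: (ZP (T := [:: 0])) => w; rewrite inE => wn.
    by rewrite hornerD hornerZ hornerXn Hq // -[w ^ n.+1%:Z]/(w ^+ n.+1) mulrC addNr.
  have := congr1 (horner^~ 0) r0; rewrite /= hornerD hornerZ hornerXn expr0n /= mulr0.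
  by rewrite addr0 horner0 => e; move: Qc; rewrite e eqxx.
- have r0 : qw Q c * 'X^(n.+1) + ((pa A2 0).[c])%:P = 0.
    apply: (ZP (T := [:: 0])) => w; rewrite inE => wn.
    rewrite hornerD hornerM hornerXn hornerC Hq // NegzE.
    rewrite -[w ^ (- (n.+1)%:Z)]/((w ^+ n.+1)^-1).
    by field; rewrite expf_neq0.
  have := congr1 (horner^~ 0) r0; rewrite /= hornerD hornerM hornerXn expr0n /= mulr0.
  by rewrite hornerC add0r horner0 => e; move: ac; rewrite e eqxx.
Qed.

Lemma stepC (Th : {mpoly C[2]}) :
  (forall c w, w != 0 -> Th.@[pt2 c w] = w * A1.@[pt3 1 c w^-1]) -> low A1 1.
Proof.
move=> HT.
have coef0 : forall c j, (2 <= j)%N -> (pv A1 c)`_j = 0.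
  move=> c j j2; rewrite nth_default //; rewrite leqNgt; apply/negP => hs.
  set p := pv A1 c in hs *.
  have [n Dn] : exists n, size p = n.+3.
    by exists (size p - 3)%N; rewrite -addn3 subnK //; exact: leq_ltn_trans j2 hs.
  have pn0 : p != 0 by rewrite -size_poly_eq0 Dn.
  set Rp : {poly C} := \sum_(i < n.+3) p`_i *: 'X^(n.+2 - i).
  have r0 : 'X^(n.+1) * qw Th c - Rp = 0.
    apply: (ZP (T := [:: 0])) => w; rewrite inE => wn.
    rewrite hornerD hornerN hornerM hornerXn hornerqw HT // -hornerpv -/p.
    rewrite (horner_coef_wide _ (eq_leq Dn)) /Rp horner_sum mulr_sumr mulr_sumr.
    rewrite -sumrB big1 // => i _; rewrite hornerZ hornerXn.
    have hi : (i <= n.+2)%N by rewrite -ltnS.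
    have -> : w ^+ n.+1 * (w * (p`_i * w^-1 ^+ i)) = p`_i * w ^+ (n.+2 - i) * (w ^+ i * w^-1 ^+ i).
      by rewrite mulrA -exprSr -[X in w ^+ X](subnK hi) exprD; ring.
    by rewrite -exprMn mulfV // expr1n mulr1 subrr.
  have := congr1 (horner^~ 0) r0; rewrite /= hornerD hornerN hornerM hornerXn expr0n /=.
  have := congr1 (horner^~ 0) r0; rewrite /= hornerD hornerN hornerM hornerXn expr0n /=.
  rewrite mul0r sub0r horner0 /Rp horner_sum big_ord_recr /=.
  rewrite hornerZ hornerXn subnn expr0 mulr1 big1 ?add0r.
    move/eqP; rewrite oppr_eq0 => /eqP e.
    by move: pn0; rewrite -lead_coef_eq0 lead_coefE Dn /= e eqxx.
  move=> i _; rewrite hornerZ hornerXn expr0n /=.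
  have : (n.+2 - i != 0)%N by have := ltn_ord i; lia.
  by move/negbTE => ->; rewrite mulr0.
move=> m hm; rewrite leqNgt; apply/negP => hj.
have := pa_neq0 q1 hm; apply/negP/negPn/eqP.
by apply: (ZP (T := [::])) => c _; rewrite -coefpv coef0.
Qed.

Lemma good_of_riccati : G_riccati_and_E_invariant A1 A2 -> good.
Proof.
case=> P [Q [[[mm Hm] _] [S HS] [Th ePTh]]].
have [l2 nz2] : low A2 0 /\ A2 != 0.
  by apply: stepA; exists S => c cS; case: (HS c cS).
have mm2 : mm = 2.
  apply: (stepB (Q := Q) (S := S)) => //.
    by move=> t w wn; case: (Hm t w wn).
  by move=> c cS; case: (HS c cS).
have l1 : low A1 1.
  apply: (stepC (Th := Th)) => c w wn.
  have [hP _] := Hm c w wn; move: hP; rewrite ePTh mevalM mevalXU /= mm2.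
  rewrite -[w ^ 2%:Z]/(w ^+ 2) expr2 -mulrA => /(mulfI wn).
  by [].
have l0 := low_A0 l1 l2.
by split => //; apply: ex1.
Qed.


Lemma inv_line : good -> A2 != 0 -> has_invariant_line A0 A1 A2.
Proof.
case=> l0 l1 [m' [hm' e']] nz2; have l2 := low_A2 l0 l1.
have W' := qhnat hm'.
have W2 : forall m, m \in msupp A2 -> (m v0 + m v1 + k = d)%N /\ m v2 = 0%N.
  by move=> m hm; have := q2 hm; have := l2 m hm; rewrite /wdeg; lia.
case: (boolP (size (pa A2 0) == 1%N)) => hsz.
- have m10 : forall m, m \in msupp A2 -> m v1 = 0%N.
    move=> m hm; have := coefpa q2 hm; rewrite (W2 m hm).2 => e.
    apply/eqP/negPn/negP => h; move: hm; rewrite mcoeff_msupp -e nth_default ?eqxx //.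
    by rewrite (eqP hsz); lia.
  pose sg : 3.-tuple {mpoly C[3]} := sig v0 v1 0.
  have A2s : A2 \mPo sg = 0.
    rewrite comp_mpolyE big1_seq // => m /andP[_ hm]; rewrite prod3 !tnth_mktuple /=.
    rewrite scale0r expr0n.
    have : m v0 != 0%N by have := W2 m hm; have := m10 m hm; lia.
    by move/negbTE => ->; rewrite !mul0r scaler0.
  have A1s : A1 \mPo sg = 0.
    have E := congr1 (comp_mpoly sg) Eul.
    rewrite comp_mpoly0 !comp_mpolyD comp_mpolyZ !compM !compX A2s mulr0 scaler0 addr0 in E.
    rewrite /sg !tnth_mktuple /= ?eqxx ?v10 scale0r mul0r add0r in E.
    by move/eqP: E; rewrite mulf_eq0 (negbTE (Xnz _ _)) => /eqP.
  have [T1 h1] := DL v0 v1 0 A1; rewrite -/sg A1s add0r in h1.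
  have [T2 h2] := DL v0 v1 0 A2; rewrite -/sg A2s add0r in h2.
  exists 1, 0; split; first by left; exact: oner_neq0.
  apply: (INV (T2 := T2) (TH := - T1)).
    by rewrite {1}h2 scale1r !scale0r subr0 addr0.
  by rewrite scale0r scale1r sub0r {1}h1 scale1r !scale0r subr0 addr0 mulrN.
- case/closed_rootP: hsz => tau rt.
  pose sg : 3.-tuple {mpoly C[3]} := sig v1 v0 tau.
  have A2s : A2 \mPo sg = 0.
    have -> : A2 \mPo sg = (pa A2 0).[tau] *: ('X_v0 ^+ (d - k)).
      rewrite comp_mpolyE pa0_low // scaler_suml; apply: eq_big_seq => m hm.
      rewrite prod3 !tnth_mktuple /= ?v01 ?eqxx ?v21 (W2 m hm).2 expr0 mulr1.
      rewrite exprZn -scalerAr -exprD scalerA.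
      by have := (W2 m hm).1; move=> Wm; rewrite (_ : (m v0 + m v1 = d - k)%N) //; lia.
    by rewrite (eqP rt) scale0r.
  have Hs : (A0 + tau *: A1) \mPo sg = 0.
    have E := congr1 (comp_mpoly sg) Eul.
    rewrite comp_mpoly0 !comp_mpolyD comp_mpolyZ !compM !compX A2s mulr0 scaler0 addr0 in E.
    rewrite /sg !tnth_mktuple /= ?eqxx ?v01 in E.
    rewrite comp_mpolyD comp_mpolyZ; apply/eqP.
    have : 'X_v0 * ((A0 \mPo sg) + tau *: (A1 \mPo sg)) = 0.
      by rewrite -E -!mul_mpolyC; ring.
    by move/eqP; rewrite mulf_eq0 (negbTE (Xnz _ _)).
  have [TH hH] := DL v1 v0 tau (A0 + tau *: A1); rewrite -/sg Hs add0r in hH.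
  have [T2 h2] := DL v1 v0 tau A2; rewrite -/sg A2s add0r in h2.
  exists (- tau), 1; split; first by right; exact: oner_neq0.
  have eF : ('X_v1 - tau *: 'X_v0 : {mpoly C[3]}) = - tau *: 'X_v0 + 1 *: 'X_v1.
    by rewrite scale1r scaleNr addrC.
  apply: (INV (T2 := T2) (TH := TH)).
    by rewrite {1}h2 eF.
  by rewrite scale1r scaleNr opprK -eF.
Qed.

End Fol.

Unset Implicit Arguments.

Theorem corollary3p4 (C : numClosedFieldType) (k d r : nat)
  (A0 A1 A2 : {mpoly C[3]}) :
  (2 <= k)%N ->
  is_foliation k d A0 A1 A2 ->
  saturated k A0 A1 A2 ->
  alg_mult A0 A1 r ->
  (G_riccati_and_E_invariant A1 A2 <-> r%:Z = d%:Z - k%:Z) /\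
  (r%:Z = d%:Z - k%:Z -> has_invariant_line A0 A1 A2).
Proof.
move=> hk [q0 q1 q2 Eul _] sat am.
have gi := good_iff hk q0 q1 am.
have e : (r%:Z = d%:Z - k%:Z) <-> (r + k)%N = d by split; lia.
split.
  split.
    by move=> /(good_of_riccati hk q1 q2 Eul)/gi.2/e.2.
  by move=> /e.1/gi.1 gd; exact: riccati_of_good hk q1 q2 Eul sat gd.
move=> /e.1/gi.1 gd.
exact: inv_line hk q0 q1 q2 Eul gd (A2_nz hk q1 Eul sat gd).
Qed.
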